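(* The following two assertions are equivalent. (T) For every admissible index $\mathbf{k}=(k_1,\ldots,k_n)$ with dual index $\mathbf{k}'$, every integer $l\ge0$ and every $\alpha$ with $\mathrm{Re}\,\alpha>0$, $S_l(\mathbf{k};\alpha)=S_l(\mathbf{k}';\alpha)$. (P) For every admissible index $\mathbf{k}=(k_1,\ldots,k_n)$ with dual index $\mathbf{k}'=(k'_1,\ldots,k'_{n'})$, every integer $l\ge0$ and every $\alpha$ with $\mathrm{Re}\,\alpha>0$, \[ \sum_{i=0}^{l}\sum_{\substack{i_1+\cdots+i_{n-1}=i\\ i_j\in\mathbb{Z}_{\ge0}}}S_{l-i}(k_1,\{1\}^{i_1},k_2,\ldots,k_{n-1},\{1\}^{i_{n-1}},k_n;\alpha) =\sum_{i=0}^{l}\sum_{\mathbf{i}^{(1)}_{k'_1-1}+\cdots+\mathbf{i}^{(n')}_{k'_{n'}-2}=i}S_{l-i}\bigl(k'_1+\mathbf{i}^{(1)}_{k'_1-1},\ldots,k'_{n'-1}+\mathbf{i}^{(n'-1)}_{k'_{n'-1}-1},k'_{n'}+\mathbf{i}^{(n')}_{k'_{n'}-2};\alpha\bigr). \]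
   Context: An index $(k_1,\ldots,k_n)$ is admissible if all $k_i$ are positive integers and $k_n\ge2$. For $a\in\mathbb{C}$, $(a)_0=1$ and $(a)_m=a(a+1)\cdots(a+m-1)$ for $m\ge1$. For an admissible index and $\mathrm{Re}\,\alpha>0$, \[ Z(\mathbf{k};\alpha)=\sum_{0\le m_1<\cdots<m_n}\frac{(\alpha)_{m_1}}{m_1!}\frac{m_n!}{(\alpha)_{m_n+1}}\frac{1}{(m_1+\alpha)^{k_1}\cdots(m_{n-1}+\alpha)^{k_{n-1}}(m_n+\alpha)^{k_n-1}}, \] and $S_l(\mathbf{k};\alpha):=\sum_{l_1+\cdots+l_n=l,\ l_i\in\mathbb{Z}_{\ge0}}Z(k_1+l_1,\ldots,k_n+l_n;\alpha)$. $\{1\}^a$ denotes $a$ consecutive entries equal to $1$. Every admissible index can be written uniquely as $(\{1\}^{a_1},b_1+2,\ldots,\{1\}^{a_s},b_s+2)$ with $a_j,b_j\in\mathbb{Z}_{\ge0}$; its dual index is $(\{1\}^{b_s},a_s+2,\ldots,\{1\}^{b_1},a_1+2)$. For $m\ge1$, $r\ge0$, $\mathbf{i}^{(m)}_r:=i^{(m)}_1+\cdots+i^{(m)}_r$ (equal to $0$ if $r=0$); the sum over $\mathbf{i}^{(1)}_{k'_1-1}+\cdots+\mathbf{i}^{(n')}_{k'_{n'}-2}=i$ runs over all tuples of nonnegative integers $(i^{(1)}_1,\ldots,i^{(1)}_{k'_1-1},\ldots,i^{(n')}_1,\ldots,i^{(n')}_{k'_{n'}-2})$ with total sum $i$. 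*)

(* Defs.v *)
(* Complex numbers are [R[i]] for an
   arbitrary [R : realType] (from mathcomp-real-closed), viewed as a
   numFieldType so that the analysis topology (limits) applies. *)
From HB Require Import structures.
From mathcomp Require Import all_boot all_order all_algebra.
From mathcomp Require Import all_classical all_reals all_analysis.
From mathcomp Require Import complex.
Import Order.TTheory GRing.Theory Num.Theory.
Import numFieldTopology.Exports numFieldNormedType.Exports.

Set Implicit Arguments.
Unset Strict Implicit.
Unset Printing Implicit Defensive.

Local Open Scope ring_scope.

Definition Cx (R : realType) : numFieldType := R[i].

Definition poch (R : realType) (a : Cx R) (m : nat) : Cx R :=
  \prod_(j < m) (a + j%:R).

Definition admissible (k : seq nat) : bool :=
  [&& k != [::], all (fun x => 0 < x)%N k & (1 < last 0 k)%N].

(* The summand of Z(k;a) at 0 <= m_1 < ... < m_n (given as the seq ms):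
   (a)_{m_1}/m_1! * m_n!/(a)_{m_n+1}
   * 1/((m_1+a)^{k_1} ... (m_{n-1}+a)^{k_{n-1}} (m_n+a)^{k_n-1}) *)
Definition Zterm (R : realType) (k : seq nat) (a : Cx R) (ms : seq nat) : Cx R :=
  let n := size k in
  poch a (head 0%N ms) / (head 0%N ms)`!%:R
  * ((last 0%N ms)`!%:R / poch a (last 0%N ms).+1)
  / \prod_(j < n) ((nth 0%N ms j)%:R + a) ^+ (nth 0%N k j - (j == n.-1 :> nat))%N.

Definition Zpartial (R : realType) (k : seq nat) (a : Cx R) (N : nat) : Cx R :=
  \sum_(t : (size k).-tuple 'I_N | sorted ltn [seq val x | x <- t])
     Zterm k a [seq val x | x <- t].

Definition Zval (R : realType) (k : seq nat) (a : Cx R) : Cx R :=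
  limn (Zpartial k a).

Definition Ssum (R : realType) (l : nat) (k : seq nat) (a : Cx R) : Cx R :=
  \sum_(t : {ffun 'I_(size k) -> 'I_l.+1} | (\sum_(j < size k) (t j : nat) == l)%N)
     Zval [seq (nth 0%N k j + t j)%N | j : 'I_(size k)] a.

(* decomposition k = ({1}^{a_1}, b_1+2, ..., {1}^{a_s}, b_s+2) into the list
   of pairs (a_j, b_j); [acc] counts the pending 1's *)
Fixpoint blocks_aux (acc : nat) (k : seq nat) : seq (nat * nat) :=
  match k with
  | [::] => [::]
  | x :: k' => if x == 1%N then blocks_aux acc.+1 k'
               else (acc, (x - 2)%N) :: blocks_aux 0 k'
  end.
Definition blocks (k : seq nat) : seq (nat * nat) := blocks_aux 0 k.

Definition dual (k : seq nat) : seq nat :=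
  flatten [seq rcons (nseq p.2 1%N) (p.1 + 2)%N | p <- rev (blocks k)].

Fixpoint insert_ones (k : seq nat) (s : seq nat) : seq nat :=
  match k with
  | [::] => [::]
  | [:: x] => [:: x]
  | x :: k' => x :: nseq (head 0%N s) 1%N ++ insert_ones k' (behead s)
  end.

(* lengths of the blocks of variables for the dual side:
   k'_m - 1 for m < n', and k'_{n'} - 2 for the last entry *)
Fixpoint dual_lens (k' : seq nat) : seq nat :=
  match k' with
  | [::] => [::]
  | [:: x] => [:: (x - 2)%N]
  | x :: k'' => (x - 1)%N :: dual_lens k''
  end.

(* cut s into consecutive blocks of lengths r and sum each block:
   bold-i^{(m)}_{r_m} *)
Fixpoint block_sums (r : seq nat) (s : seq nat) : seq nat :=
  match r with
  | [::] => [::]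
  | x :: r' => sumn (take x s) :: block_sums r' (drop x s)
  end.

Definition addseq (s t : seq nat) : seq nat := [seq (p.1 + p.2)%N | p <- zip s t].

(* Main.v *)
Require Import Defs.
From HB Require Import structures.
From mathcomp Require Import all_boot all_order all_algebra.
From mathcomp Require Import all_classical all_reals all_analysis.
From mathcomp Require Import complex.
Import Order.TTheory GRing.Theory Num.Theory.
Import numFieldTopology.Exports numFieldNormedType.Exports.
From mathcomp Require Import zify.
Local Open Scope ring_scope.

Fixpoint box (n i : nat) : seq (seq nat) :=
  if n is n'.+1 then [seq j :: s | j <- iota 0 i.+1, s <- box n' i] else [:: [::]].

Lemma box_S n i : box n.+1 i = [seq j :: s | j <- iota 0 i.+1, s <- box n i].
Proof. by []. Qed.

Lemma mem_box n i s : (s \in box n i) = (size s == n) && all (fun x => x <= i)%N s.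
Proof.
elim: n s => [|n IH] [|x s] //; rewrite box_S.
- by apply/negbTE/allpairsP => -[[j t] [_ _]].
- apply/allpairsP/idP.
  + move=> [[j t] [hj ht [-> ->]]] /=.
    move: hj ht; rewrite mem_iota IH => /andP[_ hj] /andP[/eqP -> ->].
    by rewrite eqxx /= -ltnS hj.
  + move=> /andP [hs /andP [hx ha]]; exists (x, s); split => //.
    by rewrite mem_iota /= ltnS hx.
    by rewrite IH -(eqn_add2r 1) !addn1 hs.
Qed.

Lemma box_size n i s : s \in box n i -> size s = n.
Proof. by rewrite mem_box => /andP [/eqP]. Qed.
Arguments box_size {n i s}.

Lemma box_uniq n i : uniq (box n i).
Proof.
elim: n => [|n IH] //; rewrite box_S.
apply: allpairs_uniq => //; first exact: iota_uniq.
by move=> [j s] [j' s'] _ _ /= [-> ->].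
Qed.

Lemma sum_box_cat (V : nmodType) x y i (H : seq nat -> V) :
  \sum_(s <- box (x + y) i) H s = \sum_(s1 <- box x i) \sum_(s2 <- box y i) H (s1 ++ s2).
Proof.
elim: x H => [|x IH] H; first by rewrite big_seq1.
rewrite addSn !box_S !big_allpairs_dep; apply: eq_bigr => j _.
by rewrite IH.
Qed.

Lemma box0 n : box n 0 = [:: nseq n 0%N].
Proof. by elim: n => [|n IH] //; rewrite box_S IH. Qed.

Fixpoint newB (B : seq (nat*nat)) (u : seq nat) : seq (nat*nat) :=
  if B is p :: B' then (p.1 + sumn (take p.1.+1 u), p.2)%N :: newB B' (drop p.1.+1 u) else [::].
Fixpoint DB (B : seq (nat*nat)) : seq nat :=
  if B is p :: B' then DB B' ++ (nseq p.2 1%N ++ [:: p.1 + 2]%N) else [::].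
Fixpoint DL (B : seq (nat*nat)) : seq nat :=
  if B is p :: B' then DL B' ++ (nseq p.2 0%N ++ [:: p.1.+1]) else [::].
Fixpoint Mb (B : seq (nat*nat)) : nat :=
  if B is p :: B' then (p.1.+1 + Mb B')%N else 0%N.
Fixpoint ofb (B : seq (nat*nat)) : seq nat :=
  if B is p :: B' then nseq p.1 1%N ++ (p.2 + 2)%N :: ofb B' else [::].
Fixpoint gb (acc : nat) (k u : seq nat) : seq (nat*nat) :=
  match k with [::] => [::]
  | x :: k' => if x == 1%N then gb (acc + 1 + head 0 u)%N k' (behead u)
               else (acc + head 0 u, x - 2)%N :: gb 0 k' (behead u) end.

Lemma size_bs L s : size (block_sums L s) = size L.
Proof. by elim: L s => [|x L IH] s //=; rewrite IH. Qed.

Lemma size_DB B : size (DB B) = size (DL B).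
Proof. by elim: B => [|p B IH] //=; rewrite !size_cat IH !size_nseq. Qed.

Lemma sumn_nseq0 b : sumn (nseq b 0%N) = 0%N.
Proof. by elim: b. Qed.

Lemma sumn_DL B : sumn (DL B) = Mb B.
Proof. elim: B => [|p B IH] //=; rewrite !sumn_cat IH /= sumn_nseq0; lia. Qed.

Lemma bs_cat L L2 s t : size s = sumn L ->
  block_sums (L ++ L2) (s ++ t) = block_sums L s ++ block_sums L2 t.
Proof.
elim: L s => [|x L IH] s /=; first by move/size0nil ->.
move=> hs.
have hx : (x <= size s)%N by rewrite hs leq_addr.
have hd : drop x (s ++ t) = drop x s ++ t.
  rewrite drop_cat; case: ltnP => // h.
  have e : x = size s by lia.
  by rewrite e subnn drop0 drop_size.
rewrite takel_cat // hd IH // size_drop hs; lia.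
Qed.

Lemma bs_nseq0 b L t : block_sums (nseq b 0%N ++ L) t = nseq b 0%N ++ block_sums L t.
Proof. by elim: b => [|b IH] //=; rewrite take0 drop0 IH. Qed.

Lemma addseq_cat p1 p2 q1 q2 : size p1 = size q1 ->
  addseq (p1 ++ p2) (q1 ++ q2) = addseq p1 q1 ++ addseq p2 q2.
Proof. by move=> h; rewrite /addseq zip_cat // map_cat. Qed.

Lemma addseq_nseq b x y :
  addseq (nseq b 1%N ++ [:: x]) (nseq b 0%N ++ [:: y]) = nseq b 1%N ++ [:: x + y]%N.
Proof. elim: b => [|b IH] //=; move: IH; rewrite /addseq /= => -> //. Qed.

Lemma newB_cat a b B s1 s2 : size s1 = a.+1 ->
  newB ((a, b) :: B) (s1 ++ s2) = (a + sumn s1, b)%N :: newB B s2.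
Proof. by move=> h /=; rewrite take_size_cat // drop_size_cat. Qed.

Lemma rhs_step (V : nmodType) (H : nat -> seq nat -> V) a b B c s1 s2 :
  size s2 = Mb B -> size s1 = c ->
  H (sumn (s2 ++ s1)) (addseq (DB ((a, b) :: B)) (block_sums (DL B ++ (nseq b 0%N ++ [:: c])) (s2 ++ s1)))
  = H (sumn s1 + sumn s2)%N (addseq (DB B) (block_sums (DL B) s2) ++ (nseq b 1%N ++ [:: a + sumn s1 + 2]%N)).
Proof.
move=> h2 h1.
rewrite bs_cat; last by rewrite sumn_DL.
rewrite bs_nseq0 /= -h1 take_size.
rewrite addseq_cat; last by rewrite size_bs size_DB.
rewrite addseq_nseq sumn_cat addnC.
by congr (H _ (_ ++ (_ ++ [:: _]))); lia.
Qed.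

Lemma keyK (V : nmodType) (B : seq (nat*nat)) i (H : nat -> seq nat -> V) :
  \sum_(s <- box (Mb B) i) H (sumn s) (DB (newB B s)) =
  \sum_(s <- box (Mb B) i) H (sumn s) (addseq (DB B) (block_sums (DL B) s)).
Proof.
elim: B H => [|[a b] B IH] H; first by rewrite !big_seq1.
have -> : Mb ((a, b) :: B) = (a.+1 + Mb B)%N by [].
rewrite sum_box_cat.
transitivity (\sum_(s1 <- box a.+1 i) \sum_(s2 <- box (Mb B) i)
   H (sumn s1 + sumn s2)%N (addseq (DB B) (block_sums (DL B) s2) ++ (nseq b 1%N ++ [:: a + sumn s1 + 2]%N))).
  rewrite big_seq [RHS]big_seq; apply: eq_bigr => s1 hs1.
  have sz1 := box_size hs1.
  rewrite -(IH (fun x X => H (sumn s1 + x)%N (X ++ (nseq b 1%N ++ [:: a + sumn s1 + 2]%N)))).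
  by apply: eq_bigr => s2 _; rewrite newB_cat // sumn_cat.
rewrite (addnC a.+1) sum_box_cat exchange_big.
rewrite big_seq [RHS]big_seq; apply: eq_bigr => s2 hs2.
rewrite big_seq [RHS]big_seq; apply: eq_bigr => s1 hs1.
rewrite rhs_step //; [exact: box_size hs2 | exact: box_size hs1].
Qed.

Lemma keyTop (V : nmodType) a b B i (H : nat -> seq nat -> V) :
  \sum_(s <- box (a + Mb B) i) H (sumn s) (DB (newB ((a, b) :: B) (0%N :: s))) =
  \sum_(s <- box (Mb B + a) i) H (sumn s)
     (addseq (DB ((a, b) :: B)) (block_sums (DL B ++ (nseq b 0%N ++ [:: a])) s)).
Proof.
rewrite sum_box_cat.
transitivity (\sum_(s1 <- box a i) \sum_(s2 <- box (Mb B) i)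
   H (sumn s1 + sumn s2)%N (addseq (DB B) (block_sums (DL B) s2) ++ (nseq b 1%N ++ [:: a + sumn s1 + 2]%N))).
  rewrite big_seq [RHS]big_seq; apply: eq_bigr => s1 hs1.
  have sz1 := box_size hs1.
  rewrite -(@keyK V B i (fun x X => H (sumn s1 + x)%N (X ++ (nseq b 1%N ++ [:: a + sumn s1 + 2]%N)))).
  apply: eq_bigr => s2 _.
  by rewrite -cat_cons newB_cat /= ?sz1 // sumn_cat.
rewrite sum_box_cat exchange_big.
rewrite big_seq [RHS]big_seq; apply: eq_bigr => s2 hs2.
rewrite big_seq [RHS]big_seq; apply: eq_bigr => s1 hs1.
rewrite rhs_step //; [exact: box_size hs2 | exact: box_size hs1].
Qed.

Lemma gb_shift acc y k u :
  gb acc (y :: k) u = gb (acc + head 0%N u)%N (y :: k) (0%N :: behead u).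
Proof. by rewrite /=; case: (y == 1%N); rewrite ?addn0 // addnAC. Qed.

Lemma blocks_aux_ones acc j r : blocks_aux acc (nseq j 1%N ++ r) = blocks_aux (acc + j) r.
Proof. by elim: j acc => [|j IH] acc /=; rewrite ?addn0 // IH addSnnS. Qed.

Lemma blocks_ins k acc s : blocks_aux acc (insert_ones k s) = gb acc k (0%N :: s).
Proof.
elim: k acc s => [|x [|y k] IH] acc s //.
  by rewrite /=; case: (x == 1%N); rewrite ?addn0.
have -> : insert_ones [:: x, y & k] s = x :: nseq (head 0%N s) 1%N ++ insert_ones (y :: k) (behead s) by [].
have -> : blocks_aux acc (x :: nseq (head 0%N s) 1%N ++ insert_ones (y :: k) (behead s)) =
  if x == 1%N then blocks_aux acc.+1 (nseq (head 0%N s) 1%N ++ insert_ones (y :: k) (behead s))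
  else (acc, x - 2)%N :: blocks_aux 0 (nseq (head 0%N s) 1%N ++ insert_ones (y :: k) (behead s)) by [].
have -> : gb acc [:: x, y & k] (0%N :: s) =
  if x == 1%N then gb (acc + 1 + 0) (y :: k) s else (acc + 0, x - 2)%N :: gb 0 (y :: k) s by [].
rewrite !blocks_aux_ones !IH [gb _ _ s]gb_shift [gb 0%N _ s]gb_shift.
by case: (x == 1%N); rewrite ?addn0 ?add0n // addn1.
Qed.

Lemma gb_block acc a b K u :
  gb acc (nseq a 1%N ++ (b + 2)%N :: K) u =
  (acc + a + sumn (take a.+1 u), b)%N :: gb 0 K (drop a.+1 u).
Proof.
elim: a acc u => [|a IH] acc u.
  rewrite /= addn2 /= subn2 /= addn0; case: u => [|g u] //=; by rewrite take0 addn0 drop0.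
rewrite /= IH; case: u => [|g u] /=.
  by have -> : (acc + 1 + 0 + a + 0 = acc + a.+1 + 0)%N by lia.
by have -> : (acc + 1 + g + a + sumn (take a.+1 u) = acc + a.+1 + (g + sumn (take a.+1 u)))%N by lia.
Qed.

Lemma gb_ofb B u : gb 0 (ofb B) u = newB B u.
Proof.
elim: B u => [|[a b] B IH] u //=.
by rewrite gb_block IH add0n.
Qed.

Lemma ofb_blocks k acc : k != [::] -> all (fun x => 0 < x)%N k -> (1 < last 0%N k)%N ->
  nseq acc 1%N ++ k = ofb (blocks_aux acc k).
Proof.
elim: k acc => [|x k IH] acc // _ /= /andP [hx hk].
case: eqP => [e|ne].
  case: k IH hk => [|y k] IH hk /=; first by rewrite e.
  move=> hl; rewrite -(IH acc.+1) //.
  by rewrite e; elim: acc {IH hl} => //= acc ->.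
move=> hl /=; rewrite subnK; last by move: hx ne; lia.
case: k IH hk hl => [|y k] IH hk hl //.
by rewrite -(IH 0%N).
Qed.

Lemma size_ofb B : size (ofb B) = Mb B.
Proof. by elim: B => [|[a b] B IH] //=; rewrite size_cat size_nseq /= IH addnS. Qed.

Lemma dual_DB k : dual k = DB (blocks k).
Proof.
rewrite /dual; elim: (blocks k) => [|p B IH] //=.
by rewrite rev_cons map_rcons -cats1 flatten_cat IH /= cats0 -cats1.
Qed.

Lemma dual_lens_cat p q : q != [::] -> dual_lens (p ++ q) = map (subn^~ 1%N) p ++ dual_lens q.
Proof.
move=> hq; elim: p => [|x p IH] //=.
case E: (p ++ q) => [|y r]; first by have := congr1 size E; rewrite size_cat /=; case: (q) hq => //= ? ? _; lia.
by rewrite -E IH.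
Qed.

Lemma map_DB B : map (subn^~ 1%N) (DB B) = DL B.
Proof.
elim: B => [|[a b] B IH] //=.
by rewrite !map_cat IH map_nseq /= addn2 subn1.
Qed.

Lemma dual_lens_DB a b B : dual_lens (DB ((a, b) :: B)) = DL B ++ (nseq b 0%N ++ [:: a]).
Proof.
rewrite /= dual_lens_cat ?map_DB; last by case: b.
by rewrite dual_lens_cat // map_nseq /= addn2 subn2.
Qed.

Lemma ins_shape x k s : exists tl, insert_ones (x :: k) s = x :: tl /\ last x tl = last x k
   /\ (all (fun y => 0 < y)%N k -> all (fun y => 0 < y)%N tl).
Proof.
elim: k x s => [|y k IH] x s; first by exists [::].
have [tl [e [hl ha]]] := IH y (behead s).
exists (nseq (head 0%N s) 1%N ++ y :: tl); split.
  have -> : insert_ones [:: x, y & k] s = x :: nseq (head 0%N s) 1%N ++ insert_ones (y :: k) (behead s) by [].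
  by rewrite e.
split; first by rewrite last_cat /= hl.
move=> /= /andP [hy hk]; rewrite all_cat /= hy ha ?andbT //.
by apply/allP => z /nseqP [->].
Qed.

Lemma adm_ins k s : admissible k -> admissible (insert_ones k s).
Proof.
case: k => [|x k] // /and3P [_ hxk hl].
have [tl [E [e ha]]] := ins_shape x k s.
rewrite E; move: hxk hl => /= /andP [hx hk] hl.
by rewrite /admissible /= hx ha // e hl.
Qed.

Lemma ins0 k m : insert_ones k (nseq m 0%N) = k.
Proof.
elim: k m => [|x [|y k] IH] m //.
have -> : insert_ones [:: x, y & k] (nseq m 0%N) =
  x :: nseq (head 0%N (nseq m 0%N)) 1%N ++ insert_ones (y :: k) (behead (nseq m 0%N)) by [].
have -> : behead (nseq m 0%N) = nseq m.-1 0%N by case: m.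
have -> : head 0%N (nseq m 0%N) = 0%N by case: m.
by rewrite IH.
Qed.

Lemma main_box (V : nmodType) (F : seq nat -> V) k i : admissible k ->
  \sum_(s <- box (size k).-1 i | sumn s == i) F (dual (insert_ones k s)) =
  \sum_(s <- box (sumn (dual_lens (dual k))) i | sumn s == i)
      F (addseq (dual k) (block_sums (dual_lens (dual k)) s)).
Proof.
move=> adm; have := adm; case/and3P => hne hpos hl.
have hk : k = ofb (blocks k) by rewrite -(ofb_blocks _ 0%N hne hpos hl).
have e1 s : dual (insert_ones k s) = DB (newB (blocks k) (0%N :: s)).
  by rewrite dual_DB /blocks blocks_ins {1}hk gb_ofb.
rewrite (eq_bigr (fun s => F (DB (newB (blocks k) (0%N :: s))))); last by move=> s _; rewrite e1.
have e2 : size k = Mb (blocks k) by rewrite {1}hk size_ofb.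
have hB : blocks k != [::] by move: hne; rewrite {1}hk; case: (blocks k).
rewrite dual_DB e2; move: (blocks k) hB => [|[a b] B] // _.
rewrite dual_lens_DB.
have -> : (Mb ((a, b) :: B)).-1 = (a + Mb B)%N by [].
have -> : sumn (DL B ++ (nseq b 0%N ++ [:: a])) = (Mb B + a)%N.
  by rewrite !sumn_cat sumn_DL sumn_nseq0 /= addn0.
rewrite big_mkcond [RHS]big_mkcond.
exact (@keyTop V a b B i (fun x X => if x == i then F X else 0)).
Qed.

Lemma conv (V : nmodType) n i (G : seq nat -> V) :
  \sum_(t : {ffun 'I_n -> 'I_i.+1} | (\sum_(j < n) (t j : nat) == i)%N)
      G [seq val (t j) | j : 'I_n] = \sum_(s <- box n i | sumn s == i) G s.
Proof.
pose g := fun t : {ffun 'I_n -> 'I_i.+1} => [seq val (t j) | j : 'I_n].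
have hs (t : {ffun 'I_n -> 'I_i.+1}) : (\sum_(j < n) (t j : nat))%N = sumn (g t).
  by rewrite sumnE /g big_image.
rewrite (eq_bigl (fun t => sumn (g t) == i)); last by move=> t; rewrite hs.
have hp : perm_eq (map g (index_enum {ffun 'I_n -> 'I_i.+1})) (box n i).
  apply: uniq_perm; last 1 first.
  - move=> s; rewrite mem_box; apply/mapP/idP.
      move=> [t _ ->]; rewrite /g size_image card_ord eqxx /=.
      by apply/allP => x /fintype.imageP [j _ ->]; rewrite -ltnS ltn_ord.
    move=> /andP [/eqP hsz ha].
    exists [ffun j : 'I_n => inord (nth 0%N s j) : 'I_i.+1]; first by rewrite mem_index_enum.
    apply: (@eq_from_nth _ 0%N); first by rewrite /g size_image card_ord.
    move=> j hj; rewrite hsz in hj.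
    rewrite /g /image_mem (nth_map (Ordinal hj)); last by rewrite size_enum_ord.
    rewrite -[j]/(nat_of_ord (Ordinal hj)) nth_ord_enum ffunE.
    by rewrite /= inordK // ltnS; apply: (allP ha); apply: mem_nth; rewrite hsz.
  - have gi : injective g.
      move=> t1 t2 e; apply/ffunP => o.
      apply: val_inj; have := congr1 (nth 0%N ^~ o) e.
      by rewrite /g /image_mem !(nth_map o) -?enumT ?size_enum_ord // nth_ord_enum.
    by rewrite (map_inj_uniq gi) index_enum_uniq.
  - exact: box_uniq.
rewrite -(perm_big _ hp) big_map.
by [].
Qed.

Lemma eqi (V : nmodType) (F : seq nat -> V) k i : admissible k ->
  (forall q, admissible q -> F q = F (dual q)) ->
  \sum_(t : {ffun 'I_(size k).-1 -> 'I_i.+1} | (\sum_(j < (size k).-1) (t j : nat) == i)%N)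
     F (insert_ones k [seq val (t j) | j : 'I_(size k).-1]) =
  \sum_(t : {ffun 'I_(sumn (dual_lens (dual k))) -> 'I_i.+1}
        | (\sum_(j < sumn (dual_lens (dual k))) (t j : nat) == i)%N)
     F (addseq (dual k) (block_sums (dual_lens (dual k))
          [seq val (t j) | j : 'I_(sumn (dual_lens (dual k)))])).
Proof.
move=> adm hF.
rewrite (@conv V _ i (fun s => F (insert_ones k s))).
rewrite (@conv V _ i (fun s => F (addseq (dual k) (block_sums (dual_lens (dual k)) s)))).
rewrite (eq_bigr (fun s => F (dual (insert_ones k s)))); last first.
  by move=> s _; apply: hF; apply: adm_ins.
exact: main_box.
Qed.

Lemma eq0L (V : nmodType) (F : seq nat -> V) k :
  \sum_(t : {ffun 'I_(size k).-1 -> 'I_1} | (\sum_(j < (size k).-1) (t j : nat) == 0)%N)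
     F (insert_ones k [seq val (t j) | j : 'I_(size k).-1]) = F k.
Proof.
rewrite (@conv V _ 0 (fun s => F (insert_ones k s))) box0 big_cons big_nil.
by rewrite sumn_nseq0 eqxx ins0 addr0.
Qed.

Lemma eq0R (V : nmodType) (F : seq nat -> V) k : admissible k ->
  \sum_(t : {ffun 'I_(sumn (dual_lens (dual k))) -> 'I_1}
        | (\sum_(j < sumn (dual_lens (dual k))) (t j : nat) == 0)%N)
     F (addseq (dual k) (block_sums (dual_lens (dual k))
          [seq val (t j) | j : 'I_(sumn (dual_lens (dual k)))])) = F (dual k).
Proof.
move=> adm.
rewrite (@conv V _ 0 (fun s => F (addseq (dual k) (block_sums (dual_lens (dual k)) s)))).
rewrite -main_box // box0 big_cons big_nil.
by rewrite sumn_nseq0 eqxx ins0 addr0.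
Qed.

Lemma split_lemma (V : zmodType) l (f g : nat -> V) :
  \sum_(i < l.+1) f i = \sum_(i < l.+1) g i ->
  (forall i : 'I_l, f (lift ord0 i) = g (lift ord0 i)) -> f 0%N = g 0%N.
Proof.
rewrite !big_ord_recl => e h.
by move: e; rewrite (eq_bigr _ (fun i _ => h i)) => /addIr.
Qed.

Theorem proposition2p9 (R : realType) :
  (forall k : seq nat, admissible k ->
     forall (l : nat) (a : Cx R), 0 < complex.Re a ->
       Ssum l k a = Ssum l (dual k) a)
  <->
  (forall k : seq nat, admissible k ->
     forall (l : nat) (a : Cx R), 0 < complex.Re a ->
       \sum_(i < l.+1)
         \sum_(t : {ffun 'I_(size k).-1 -> 'I_i.+1}
                 | (\sum_(j < (size k).-1) (t j : nat) == i)%N)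
           Ssum (l - i) (insert_ones k [seq val (t j) | j : 'I_(size k).-1]) a
       =
       \sum_(i < l.+1)
         \sum_(t : {ffun 'I_(sumn (dual_lens (dual k))) -> 'I_i.+1}
                 | (\sum_(j < sumn (dual_lens (dual k))) (t j : nat) == i)%N)
           Ssum (l - i)
             (addseq (dual k)
                (block_sums (dual_lens (dual k))
                   [seq val (t j) | j : 'I_(sumn (dual_lens (dual k)))])) a).
Proof.
Proof.
split.
  move=> T k adm l a ha; apply: eq_bigr => i _.
  apply: (@eqi _ (fun q => Ssum (l - i) q a) k i adm) => q hq; exact: T.
move=> P.
suff H : forall l k (a : Cx R), admissible k -> 0 < complex.Re a -> Ssum l k a = Ssum l (dual k) a.
  by move=> k adm l a ha; exact: H.
elim/ltn_ind => l IH k a adm ha.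
have hlt (i : 'I_l) : (l - lift ord0 i < l)%N.
  rewrite lift0; have := ltn_ord i; lia.
pose f := fun n : nat =>
  \sum_(t : {ffun 'I_(size k).-1 -> 'I_n.+1} | (\sum_(j < (size k).-1) (t j : nat) == n)%N)
     Ssum (l - n) (insert_ones k [seq val (t j) | j : 'I_(size k).-1]) a.
pose g := fun n : nat =>
  \sum_(t : {ffun 'I_(sumn (dual_lens (dual k))) -> 'I_n.+1}
        | (\sum_(j < sumn (dual_lens (dual k))) (t j : nat) == n)%N)
     Ssum (l - n) (addseq (dual k) (block_sums (dual_lens (dual k))
          [seq val (t j) | j : 'I_(sumn (dual_lens (dual k)))])) a.
have := P k adm l a ha.
move/(@split_lemma _ l f g).
have h1 : f 0%N = Ssum l k a by rewrite /f (@eq0L _ (fun q => Ssum (l - 0) q a) k) subn0.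
have h2 : g 0%N = Ssum l (dual k) a by rewrite /g (@eq0R _ (fun q => Ssum (l - 0) q a) k adm) subn0.
rewrite h1 h2; apply=> i.
exact: (@eqi _ (fun q => Ssum (l - lift ord0 i) q a) k (lift ord0 i) adm
             (fun q hq => IH _ (hlt i) q a hq ha)).
Qed.
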